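(* Let $(V,\{A,B\})$ be a forking problem with a monotonic profile. The assignments returned by $R_A$ and $R_B$ (described in the context) coincide if and only if the profile admits a unique stable assignment.
   Context: Agents $V=\{v_1,\dots,v_n\}$; two alternatives $A,B$. Each agent $v_i$ has a strict total order $\succ_i$ on $\{A,B\}\times\{1,\dots,n\}$, where $(S,j)$ means being in the community adopting $S$ of size $j$; it is monotonic if $(S,j)\succ_i(S,k)$ whenever $k<j$. An assignment is a map $f:V\to\{A,B\}$; $v_i$ prefers $f$ to $g$ if $(f(v_i),|f^{-1}(f(v_i))|)\succ_i(g(v_i),|g^{-1}(g(v_i))|)$. An assignment $f$ is stable if there is no assignment $f'\neq f$ such that every agent $v_i$ with $f'(v_i)\neq f(v_i)$ prefers $f'$ to $f$. Algorithm $R_A$: set $V_A=V$, $V_B=\emptyset$, $a=|V_A|$, $b=|V_B|$. Repeat: let $k$ be the largest $j\in\{1,\dots,a\}$ with $|\{v_i\in V_A:(B,b+j)\succ_i(A,a)\}|\ge j$, or $k=0$ if none exists. If $k=0$, output $f$ with $f^{-1}(A)=V_A$, $f^{-1}(B)=V_B$. Otherwise let $X=\{v_i\in V_A:(B,b+k)\succ_i(A,a)\}$, move $X$ from $V_A$ to $V_B$, update $a,b$, and repeat. Algorithm $R_B$ is the same with the roles of $A$ and $B$ exchanged (it starts with all agents at $B$ and moves groups to $A$). *)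

(* Defs.v *)
From HB Require Import structures.
From mathcomp Require Import all_boot.
Set Implicit Arguments. Unset Strict Implicit. Unset Printing Implicit Defensive.

Inductive alt := A | B.
Definition alt2bool (a : alt) : bool := if a is A then true else false.
Definition bool2alt (b : bool) : alt := if b then A else B.
Lemma alt2boolK : cancel alt2bool bool2alt. Proof. by case. Qed.
HB.instance Definition _ := Finite.copy alt (can_type alt2boolK).

Definition other (S : alt) : alt := if S is A then B else A.

(* Agents are 'I_n; a preference of an agent is a relation on pairs
   (alternative, community size); only sizes 1..n are meaningful. *)
Definition dom (n : nat) (x : alt * nat) : bool := (0 < x.2) && (x.2 <= n).

Definition strict_total_order (n : nat) (r : rel (alt * nat)) : Prop :=
  [/\ {in dom n, forall x, ~~ r x x},
      {in dom n & &, forall y x z, r x y -> r y z -> r x z}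
    & {in dom n &, forall x y, x != y -> r x y || r y x}].

Definition monotonic (n : nat) (r : rel (alt * nat)) : Prop :=
  forall (S : alt) (j k : nat), 0 < k -> k < j -> j <= n -> r (S, j) (S, k).

Definition assignment (n : nat) := {ffun 'I_n -> alt}.

Definition comm_size n (f : assignment n) (i : 'I_n) : nat :=
  #|[set j | f j == f i]|.

Definition point n (f : assignment n) (i : 'I_n) : alt * nat :=
  (f i, comm_size f i).

Definition prefers n (pref : 'I_n -> rel (alt * nat)) (i : 'I_n)
  (f g : assignment n) : bool := pref i (point f i) (point g i).

Definition stable n (pref : 'I_n -> rel (alt * nat)) (f : assignment n) : Prop :=
  ~ exists f' : assignment n,
      f' != f /\ forall i, f' i != f i -> prefers pref i f' f.

(* One round of algorithm R_S: V_S = f^-1(S), V_T = f^-1(T), T = other S. *)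
Section Alg.
Variables (n : nat) (pref : 'I_n -> rel (alt * nat)) (S : alt).

Definition cnt (f : assignment n) (X : alt) : nat := #|[set i | f i == X]|.

Definition cand (f : assignment n) (j : nat) : {set 'I_n} :=
  [set i | (f i == S) && pref i (other S, cnt f (other S) + j) (S, cnt f S)].

Definition kmax (f : assignment n) : nat :=
  \max_(j < (cnt f S).+1 | (0 < j) && (j <= #|cand f j|)) j.

Definition step (f : assignment n) : assignment n :=
  if kmax f == 0 then f
  else [ffun i => if i \in cand f (kmax f) then other S else f i].

(* Start with everybody at S; each nontrivial round moves >= 1 agent,
   so after n.+1 rounds the algorithm has stopped (step is the identity
   at termination). *)
Definition R : assignment n := iter n.+1 step [ffun => S].
End Alg.

(* Main.v *)
Require Import Defs.
From mathcomp Require Import all_boot zify.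
Set Implicit Arguments. Unset Strict Implicit. Unset Printing Implicit Defensive.

Lemma domP n (x : alt * nat) : (x \in dom n) = (0 < x.2 <= n).
Proof. by []. Qed.

Lemma r_irr n r x : strict_total_order n r -> 0 < x.2 <= n -> ~~ r x x.
Proof. by case=> irr _ _ hx; apply: irr. Qed.

Lemma r_trans n r x y z : strict_total_order n r ->
  0 < x.2 <= n -> 0 < y.2 <= n -> 0 < z.2 <= n -> r x y -> r y z -> r x z.
Proof. by case=> _ tr _ hx hy hz; apply: (tr y x z). Qed.

Lemma r_asym n r x y : strict_total_order n r ->
  0 < x.2 <= n -> 0 < y.2 <= n -> r x y -> r y x -> False.
Proof.
move=> h hx hy rxy ryx; have := r_irr h hx; rewrite (r_trans h hx hy hx rxy ryx).
by [].
Qed.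

Lemma monoL n r (X : alt) k j z : strict_total_order n r -> monotonic n r ->
  0 < k -> k <= j -> j <= n -> 0 < z.2 <= n -> r (X, k) z -> r (X, j) z.
Proof.
move=> h m k0 kj jn hz rk; have [lt|eq] : k < j \/ k = j by lia.
  2: by subst.
apply: (r_trans (y:=(X,k)) h) => //=; try (apply/andP; split) => //; try lia.
by apply: m.
Qed.

Lemma monoR n r (X : alt) k j z : strict_total_order n r -> monotonic n r ->
  0 < k -> k <= j -> j <= n -> 0 < z.2 <= n -> r z (X, j) -> r z (X, k).
Proof.
move=> h m k0 kj jn hz rk; have [lt|eq] : k < j \/ k = j by lia.
  2: by subst.
apply: (r_trans (y:=(X,j)) h) => //=; try (apply/andP; split) => //; try lia.
by apply: m.
Qed.

From mathcomp Require Import zify.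
Lemma alt_cases (S x : alt) : x = S \/ x = other S.
Proof. by case: S; case: x; auto. Qed.

Lemma other_neq (S : alt) : (other S == S) = false.
Proof. by case: S. Qed.

Lemma neq_other (S x : alt) : x != S -> x = other S.
Proof. by case: S; case: x. Qed.

Lemma cnt_sum n (f : assignment n) S : cnt f S + cnt f (other S) = n.
Proof.
rewrite /cnt.
have -> : [set i | f i == other S] = ~: [set i | f i == S].
  by apply/setP => i; rewrite !inE; case: (alt_cases S (f i)) => ->; case: S.
by rewrite cardsC card_ord.
Qed.

Lemma comm_sizeE n (f : assignment n) i X : f i = X -> comm_size f i = cnt f X.
Proof. by rewrite /comm_size /cnt => ->. Qed.

Lemma cnt_pos n (f : assignment n) i X : f i = X -> 0 < cnt f X.
Proof. by move=> fi; apply/card_gt0P; exists i; rewrite inE fi. Qed.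

Lemma cnt_le n (f : assignment n) X : cnt f X <= n.
Proof. have := cnt_sum f X; lia. Qed.

Lemma cardsU_disj (T : finType) (C D : {set T}) :
  (forall i, i \in C -> i \in D -> False) -> #|C :|: D| = #|C| + #|D|.
Proof.
move=> h; rewrite cardsU.
suff -> : C :&: D = set0 by rewrite cards0 subn0.
by apply/setP => i; rewrite !inE; apply/negP => /andP [] /h H /H.
Qed.

Lemma cardsU_le (T : finType) (C D : {set T}) : #|C :|: D| <= #|C| + #|D|.
Proof. by rewrite cardsU leq_subr. Qed.

Lemma cand_sub n pref S (f : assignment n) j i : i \in cand pref S f j -> f i = S.
Proof. by rewrite inE => /andP [/eqP]. Qed.

Lemma kmax_spec n pref S (f : assignment n) : kmax pref S f != 0 ->
  [/\ 0 < kmax pref S f, kmax pref S f <= cnt f S &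
      kmax pref S f <= #|cand pref S f (kmax pref S f)| ].
Proof.
rewrite /kmax.
case: (pickP (fun j : 'I_(cnt f S).+1 => (0 < j) && (j <= #|cand pref S f j|))) => [i0 Pi0|P0].
  rewrite (bigmax_eq_arg i0 Pi0).
  case: arg_maxnP => // j /andP [j0 jc] _ _; split => //.
  by rewrite -ltnS ltn_ord.
by rewrite big_pred0 //; rewrite eqxx.
Qed.

Lemma kmax_ge n pref S (f : assignment n) j : 0 < j -> j <= cnt f S ->
  j <= #|cand pref S f j| -> j <= kmax pref S f.
Proof.
move=> j0 ja jc; rewrite /kmax.
have jlt : j < (cnt f S).+1 by [].
by apply: (leq_bigmax_cond (Ordinal jlt) (F := fun i : 'I_(cnt f S).+1 => nat_of_ord i)); rewrite /= j0.
Qed.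

Lemma step_eq n pref S (f : assignment n) i : kmax pref S f != 0 ->
  step pref S f i = if i \in cand pref S f (kmax pref S f) then other S else f i.
Proof. by rewrite /step => /negbTE ->; rewrite ffunE. Qed.

Lemma step_id n pref S (f : assignment n) : kmax pref S f = 0 -> step pref S f = f.
Proof. by rewrite /step => ->. Qed.

Lemma cnt_step n pref S (f : assignment n) : kmax pref S f != 0 ->
  cnt (step pref S f) (other S) = cnt f (other S) + #|cand pref S f (kmax pref S f)|.
Proof.
move=> k0; rewrite /cnt -cardsU_disj.
  apply: eq_card => i; rewrite in_setU.
  case: (boolP (i \in cand pref S f (kmax pref S f))) => h; move: (h); rewrite !inE step_eq //; [rewrite h | rewrite (negbTE h)].
    by rewrite eqxx orbT.
  by rewrite orbF.
move=> i; rewrite inE => /eqP fi /cand_sub; rewrite fi => /eqP.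
by rewrite other_neq.
Qed.

Lemma R_ind n pref S (P : assignment n -> Prop) :
  P [ffun => S] -> (forall g, P g -> P (step pref S g)) -> P (R pref S).
Proof. by move=> h0 hs; rewrite /R; elim: n.+1 => //= m IH; apply: hs. Qed.

Lemma other_ne (S : alt) : other S <> S.
Proof. by case: S. Qed.

Lemma inv2_step n (pref : 'I_n -> rel (alt * nat)) S (f g : assignment n) :
  (forall i, strict_total_order n (pref i)) -> (forall i, monotonic n (pref i)) ->
  stable pref f ->
  (forall i, g i = other S -> f i = other S) ->
  forall i, step pref S g i = other S -> f i = other S.
Proof.
move=> sto mon st inv i.
case: (eqVneq (kmax pref S g) 0) => [k0|k0]; first by rewrite step_id //; apply: inv.
rewrite step_eq //; case: ifP => hi; last by apply: inv.
move=> _; have [kp ka kc] := kmax_spec k0.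
set k := kmax pref S g in kp ka kc hi *.
set X := cand pref S g k in kc hi *.
case: (alt_cases S (f i)) => fi; last by [].
exfalso; apply: st.
pose Y := [set j | (j \in X) && (f j == S)].
pose f2 : assignment n := [ffun j => if j \in Y then other S else f j].
exists f2; split.
  apply/eqP => /ffunP /(_ i); rewrite ffunE inE hi fi eqxx /=.
  exact: other_ne.
move=> j; rewrite ffunE; case: ifP => hj; last by rewrite eqxx.
move=> _; move: hj; rewrite inE => /andP [jX /eqP fj].
have f2j : f2 j = other S by rewrite ffunE inE jX fj eqxx.
rewrite /prefers /point (comm_sizeE fj) (comm_sizeE f2j) f2j fj.
move: (jX); rewrite inE => /andP [_ pj].
have ha : cnt f S <= cnt g S.
  apply: subset_leq_card; apply/subsetP => x; rewrite !inE => /eqP fx; apply/eqP.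
  case: (alt_cases S (g x)) => // gx.
  by move: (inv _ gx); rewrite fx => /esym /other_ne.
have hb : cnt g (other S) + #|X| <= cnt f2 (other S).
  rewrite /cnt -cardsU_disj.
    apply: subset_leq_card; apply/subsetP => x; rewrite in_setU => /orP [|xX].
      rewrite inE => /eqP gx; rewrite inE ffunE (inv _ gx); by case: ifP.
    rewrite inE ffunE; case: ifP => // /negbT; rewrite in_set xX /=.
    by case: (alt_cases S (f x)) => ->; rewrite ?eqxx.
  by move=> x; rewrite inE => /eqP gx /cand_sub; rewrite gx => /other_ne.
have hn := cnt_le f2 (other S).
have fp := cnt_pos fj.
have gn := cnt_le g S.
apply: (monoR (k:=cnt f S) (j:=cnt g S) (sto j) (mon j)) => //=; try lia.
apply: (monoL (k:=cnt g (other S) + k) (sto j) (mon j)) => //=; lia.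
Qed.

Lemma R_below n (pref : 'I_n -> rel (alt * nat)) S (f : assignment n) :
  (forall i, strict_total_order n (pref i)) -> (forall i, monotonic n (pref i)) ->
  stable pref f -> forall i, R pref S i = other S -> f i = other S.
Proof.
move=> sto mon st.
apply: (R_ind (P := fun g => forall i, g i = other S -> f i = other S)).
  by move=> i; rewrite ffunE => /esym /other_ne.
by move=> g; apply: inv2_step.
Qed.

Lemma R_fix n (pref : 'I_n -> rel (alt * nat)) S : kmax pref S (R pref S) = 0.
Proof.
have key : forall m, kmax pref S (iter m (step pref S) [ffun => S]) = 0 \/
   cnt (iter m (step pref S) [ffun => S]) S + m <= n.
  elim => [|m IH]; first by right; rewrite addn0 cnt_le.
  rewrite iterS; move: IH; set g := iter m _ _ => IH.
  case: (eqVneq (kmax pref S g) 0) => k0; first by left; rewrite step_id.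
  right; case: IH => [e|IH]; first by rewrite e eqxx in k0.
  have [kp _ kc] := kmax_spec k0.
  have := cnt_step k0; have := cnt_sum (step pref S g) S; have := cnt_sum g S; lia.
by case: (key n.+1) => // h; lia.
Qed.

Definition inv1 n (pref : 'I_n -> rel (alt * nat)) S (g : assignment n) :=
  exists th : 'I_n -> nat, forall v, g v = other S ->
  [/\ 0 < th v <= n, pref v (other S, cnt g (other S)) (S, th v) &
      #|[set w | (g w == other S) && (th w <= th v)]| + cnt g S <= th v].

Lemma inv1_step n (pref : 'I_n -> rel (alt * nat)) S (g : assignment n) :
  (forall i, strict_total_order n (pref i)) -> (forall i, monotonic n (pref i)) ->
  inv1 pref S g -> inv1 pref S (step pref S g).
Proof.
move=> sto mon [th H].
case: (eqVneq (kmax pref S g) 0) => k0; first by rewrite step_id //; exists th.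
have [kp ka kc] := kmax_spec k0.
have cs := cnt_step k0.
have hstep : forall w, step pref S g w =
   if w \in cand pref S g (kmax pref S g) then other S else g w.
  by move=> w; apply: step_eq.
have hXS : forall w, w \in cand pref S g (kmax pref S g) -> g w = S by move=> w; apply: cand_sub.
have hXp : forall w, w \in cand pref S g (kmax pref S g) ->
   pref w (other S, cnt g (other S) + kmax pref S g) (S, cnt g S).
  by move=> w; rewrite inE => /andP [].
move: (step pref S g) hstep cs => g' hstep cs.
move: (cand pref S g (kmax pref S g)) kc cs hstep hXS hXp => X kc cs hstep hXS hXp.
move: (kmax pref S g) kp ka kc hXp => k kp ka kc hXp.
have hX : #|X| <= cnt g S.
  by apply: subset_leq_card; apply/subsetP => w /hXS ws; rewrite inE ws.
have sum1 := cnt_sum g S; have sum2 := cnt_sum g' S.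
have thgt : forall w, g w = other S -> cnt g S < th w.
  move=> w gw; have [_ _ c] := H w gw.
  suff : 0 < #|[set w0 | (g w0 == other S) && (th w0 <= th w)]| by lia.
  by apply/card_gt0P; exists w; rewrite inE gw eqxx leqnn.
have bn := cnt_le g (other S).
exists (fun w => if w \in X then cnt g S else th w) => v.
rewrite hstep; case: ifP => vX.
  move=> _; split.
  - lia.
  - apply: (monoL (k:=cnt g (other S) + k) (sto v) (mon v)) => //=; try lia.
    exact: hXp.
  - apply: (@leq_trans (#|X| + cnt g' S)); last by lia.
    rewrite leq_add2r.
    apply: subset_leq_card; apply/subsetP => w; rewrite inE hstep.
    case: ifP => // wX /andP [/eqP gw le].
    by have := thgt w gw; lia.
move=> gv; have [t0 pv card] := H v gv; split => //.
  apply: (monoL (k:=cnt g (other S)) (sto v) (mon v)) => //=; try lia.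
  by apply: (cnt_pos gv).
apply: (@leq_trans (#|[set w | (g w == other S) && (th w <= th v)]| + #|X| + cnt g' S)); last by lia.
rewrite leq_add2r.
apply: leq_trans (cardsU_le _ _); apply: subset_leq_card; apply/subsetP => w.
rewrite in_setU inE hstep; case: ifP => wX; first by rewrite orbT.
by move=> /andP [gw le]; rewrite inE gw le.
Qed.

Lemma R_stable n (pref : 'I_n -> rel (alt * nat)) S :
  (forall i, strict_total_order n (pref i)) -> (forall i, monotonic n (pref i)) ->
  stable pref (R pref S).
Proof.
move=> sto mon.
have [th H] : inv1 pref S (R pref S).
  apply: R_ind; last by move=> g; apply: inv1_step.
  by exists (fun _ => 0) => v; rewrite ffunE => /esym /other_ne.
have k0 := R_fix pref S.
move: (R pref S) H k0 => g H k0.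
move=> [f2 [ne Hp]].
have sum1 := cnt_sum g S.
case: (pickP (fun v => (g v == other S) && (f2 v == S))) => [v0 Pv0 | none].
  set DB := [set v | (g v == other S) && (f2 v == S)].
  case: (@arg_maxnP _ v0 (fun v => (g v == other S) && (f2 v == S)) th Pv0) => v vin vmin.
  move: (vin) => /andP [/eqP gv /eqP f2v].
  have [t0 pv card] := H v gv.
  have hsub : #|DB| <= #|[set w | (g w == other S) && (th w <= th v)]|.
    apply: subset_leq_card; apply/subsetP => w; rewrite !inE => win.
    have := vmin w win; move: win => /andP [-> _]; by [].
  have hf2 : cnt f2 S <= cnt g S + #|DB|.
    apply: leq_trans (cardsU_le _ _); apply: subset_leq_card; apply/subsetP => w.
    rewrite !inE => /eqP fw; case: (alt_cases S (g w)) => ->; rewrite ?eqxx //= fw eqxx.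
    by rewrite orbT.
  have hne : f2 v != g v by rewrite f2v gv eq_sym other_neq.
  have := Hp v hne; rewrite /prefers /point (comm_sizeE f2v) (comm_sizeE gv) f2v gv => p2.
  have c1 := cnt_pos f2v; have c2 := cnt_pos gv; have c3 := cnt_le g (other S).
  apply: (r_asym (sto v) _ _ p2 (monoR (k:=cnt f2 S) (sto v) (mon v) _ _ _ _ pv)) => /=; lia.
have hD : forall w, f2 w != g w -> g w = S /\ f2 w = other S.
  move=> w ne'; case: (alt_cases S (g w)) => gw.
    by split => //; apply: neq_other; rewrite -gw.
  have := none w; rewrite gw eqxx /=; case: (alt_cases S (f2 w)) => fw; rewrite fw ?eqxx //.
  by rewrite fw gw eqxx in ne'.
set D := [set v | f2 v != g v].
have Dpos : 0 < #|D|.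
  case: (pickP (fun w => f2 w != g w)) => [w hw|nn]; first by apply/card_gt0P; exists w; rewrite inE.
  move/negP: ne; case; apply/eqP/ffunP => w; apply/eqP; move: (nn w) => /negbFE.
  by [].
have hDa : #|D| <= cnt g S.
  by apply: subset_leq_card; apply/subsetP => w; rewrite !inE => /hD [-> _].
have hf2T : cnt f2 (other S) <= cnt g (other S) + #|D|.
  apply: leq_trans (cardsU_le _ _); apply: subset_leq_card; apply/subsetP => w.
  rewrite !inE => /eqP fw; case: (alt_cases S (g w)) => gw; rewrite gw ?eqxx //= fw.
  by case: S {none hD gw fw Dpos hDa D k0 H sum1}.
have : #|D| <= kmax pref S g.
  apply: kmax_ge => //.
  apply: subset_leq_card; apply/subsetP => w wD.
  have wne : f2 w != g w by move: wD; rewrite inE.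
  have [gw fw] := hD w wne.
  have := Hp w wne; rewrite /prefers /point (comm_sizeE fw) (comm_sizeE gw) fw gw => p.
  rewrite inE gw eqxx /=.
  have c1 := cnt_pos fw; have c2 := cnt_pos gw.
  apply: (monoL (k:=cnt f2 (other S)) (sto w) (mon w)) => //=.
  - apply: (@leq_trans (cnt g (other S) + cnt g S)); first by rewrite leq_add2l.
    by rewrite addnC sum1.
  - by rewrite c2 cnt_le.
by rewrite k0 leqn0 => /eqP D0; rewrite D0 in Dpos.
Qed.

Theorem theorem2 (n : nat) (pref : 'I_n -> rel (alt * nat)) :
  (forall i, strict_total_order n (pref i)) ->
  (forall i, monotonic n (pref i)) ->
  (R pref A = R pref B <-> exists! f : assignment n, stable pref f).
Proof.
move=> sto mon; split.
  move=> eAB; exists (R pref A); split; first exact: R_stable.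
  move=> f st; apply/ffunP => i.
  case: (alt_cases A (R pref A i)) => h.
    have := R_below sto mon st (S:=B) (i:=i); rewrite -eAB h /=.
    by move=> /(_ erefl) ->.
  by rewrite h; exact: (esym (R_below (S:=A) sto mon st h)).
move=> [f [st u]].
by rewrite -(u _ (R_stable (S:=A) sto mon)) -(u _ (R_stable (S:=B) sto mon)).
Qed.
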